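(* Let $(X,d,\mu)$ be an unbounded metric measure space with base point $a$ and let $Q>0$. If $\mu$ is Ahlfors $Q$-regular on $X$ and $q=2Q$, then $\hat\mu_q$ is Ahlfors $Q$-regular on $(\widehat X,\hat d)$, i.e. $\hat\mu_q(\widehat B(x,r))\simeq r^Q$ for all $x\in\widehat X$ and $0<r\le 2\operatorname{diam}_{\hat d}\widehat X=2$, with comparison constants depending only on $Q$ and the Ahlfors regularity constants of $\mu$.
   Context: $\mu$ is a positive complete Borel measure on $(X,d)$ with $0<\mu(B)<\infty$ for every (open) ball. $\mu$ is Ahlfors $Q$-regular if there is $C\ge1$ with $C^{-1}r^Q\le\mu(B(x,r))\le Cr^Q$ for all $x\in X$ and $0<r\le2\operatorname{diam}X$. Sphericalization: $|x|=d(x,a)$, $\widehat X=X\cup\{\infty\}$, $d_a(x,y)=\frac{d(x,y)}{(1+|x|)(1+|y|)}$ for $x,y\in X$, $d_a(x,\infty)=d_a(\infty,x)=\frac1{1+|x|}$, $d_a(\infty,\infty)=0$; $\hat d(x,y)=\inf\sum_{j=1}^k d_a(x_{j-1},x_j)$ over finite chains $x=x_0,\dots,x_k=y$ in $\widehat X$; $\widehat B(x,r)=\{y\in\widehat X:\hat d(x,y)<r\}$; $\operatorname{diam}_{\hat d}\widehat X=1$. The measure $\hat\mu_q$ on $\widehat X$ is $d\hat\mu_q(x)=\frac{d\mu(x)}{(1+|x|)^q}$ on $X$ with $\hat\mu_q(\{\infty\})=0$. *)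

(* Defs.v *)
From HB Require Import structures.
From mathcomp Require Import all_boot all_order all_algebra.
From mathcomp Require Import all_classical all_reals all_analysis.
Set Implicit Arguments. Unset Strict Implicit. Unset Printing Implicit Defensive.
Import Order.TTheory GRing.Theory Num.Theory.
Local Open Scope classical_set_scope.
Local Open Scope ring_scope.

Section Defs.
Context {R : realType}.

Definition is_metric {S : Type} (dist : S -> S -> R) :=
  [/\ forall x y, 0 <= dist x y,
      forall x y, dist x y = 0 <-> x = y,
      forall x y, dist x y = dist y x &
      forall x y z, dist x z <= dist x y + dist y z].

Definition mball {S : Type} (dist : S -> S -> R) (x : S) (r : R) : set S :=
  [set y | dist x y < r].

Definition dopen {S : Type} (dist : S -> S -> R) (A : set S) :=
  forall x, A x -> exists2 r, 0 < r & mball dist x r `<=` A.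

Definition mdiam {S : Type} (dist : S -> S -> R) : \bar R :=
  ereal_sup [set (dist x y)%:E | x in [set: S] & y in [set: S]].

Definition unbounded {S : Type} (dist : S -> S -> R) :=
  forall M : R, exists x y, M < dist x y.

Definition ahlfors_regular {S : Type} (dist : S -> S -> R)
    (nu : set S -> \bar R) (Q C : R) :=
  1 <= C /\
  forall x r, 0 < r -> (r%:E <= 2%:E * mdiam dist)%E ->
    ((C^-1 * r `^ Q)%:E <= nu (mball dist x r))%E /\
    (nu (mball dist x r) <= (C * r `^ Q)%:E)%E.

(** Sphericalization: widehat X = option S, None playing the role of infinity. *)
Definition sph_da {S : Type} (dist : S -> S -> R) (a : S)
    (x y : option S) : R :=
  match x, y with
  | Some x, Some y => dist x y / ((1 + dist x a) * (1 + dist y a))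
  | Some x, None | None, Some x => (1 + dist x a)^-1
  | None, None => 0
  end.

Fixpoint chain_len {S : Type} (f : S -> S -> R) (x : S) (s : seq S) (y : S) : R :=
  match s with
  | [::] => f x y
  | z :: s' => f x z + chain_len f z s' y
  end.

Definition sph_dist {S : Type} (dist : S -> S -> R) (a : S)
    (x y : option S) : R :=
  inf [set chain_len (sph_da dist a) x s y | s in [set: seq (option S)]].

(** The measure hat mu_q: d hat mu_q = d mu / (1+|x|)^q on X, hat mu_q({oo}) = 0. *)
Definition sph_measure {dsp : measure_display} {T : measurableType dsp}
    (dist : T -> T -> R) (a : T) (mu : set T -> \bar R) (q : R)
    (E : set (option T)) : \bar R :=
  (\int[mu]_(x in [set x | E (Some x)]) (((1 + dist x a) `^ q)^-1)%:E)%E.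

End Defs.

(* Main.v *)
Require Import Defs.
From HB Require Import structures.
From mathcomp Require Import all_boot all_order all_algebra.
From mathcomp Require Import all_classical all_reals all_analysis.
From mathcomp Require Import measurable_realfun.
From mathcomp Require Import ring lra.
Import Order.TTheory GRing.Theory Num.Theory.
Local Open Scope classical_set_scope.
Local Open Scope ring_scope.



Section sph.
Context {R : realType} {T : Type} (dist : T -> T -> R) (a : T).
Hypothesis hm : is_metric dist.

Let da := sph_da dist a.
Definition Fo (u : option T) : R :=
  match u with Some x => (1 + dist x a)^-1 | None => 0 end.

Lemma d_ge0 x y : 0 <= dist x y. Proof. by case: hm. Qed.
Lemma d_sym x y : dist x y = dist y x. Proof. by case: hm. Qed.
Lemma d_tri x y z : dist x z <= dist x y + dist y z. Proof. by case: hm. Qed.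
Lemma d_xx x : dist x x = 0. Proof. by case: hm => _ h _ _; apply/h. Qed.
Lemma n_gt0 x : 0 < 1 + dist x a.
Proof. by rewrite ltr_pwDl// d_ge0. Qed.

Lemma da_ge0 u v : 0 <= da u v.
Proof.
case: u => [x|]; case: v => [y|] //=; rewrite /da /=.
- by rewrite divr_ge0 ?d_ge0// mulr_ge0// ltW// n_gt0.
- by rewrite invr_ge0 ltW// n_gt0.
- by rewrite invr_ge0 ltW// n_gt0.
Qed.

Lemma da_sym u v : da u v = da v u.
Proof.
rewrite /da; case: u => [x|]; case: v => [y|] //=.
by rewrite (d_sym x y) [(1 + dist x a) * _]mulrC.
Qed.

Lemma da_le1 u v : da u v <= 1.
Proof.
have H x : (1 + dist x a)^-1 <= 1.
  by rewrite invr_le1 ?n_gt0 ?unitf_gt0 ?n_gt0// lerDl d_ge0.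
case: u => [x|]; case: v => [y|] //=; rewrite /da /=.
rewrite ler_pdivrMr ?mulr_gt0 ?n_gt0// mul1r.
have h1 := d_tri x a y; rewrite (d_sym a y) in h1.
have hx := d_ge0 x a; have hy := d_ge0 y a.
nra.
Qed.

Lemma F_lip u v : Fo u - Fo v <= da u v.
Proof.
case: u => [x|]; case: v => [y|] //=; rewrite /da /= ?subr0 ?sub0r //.
- have hx := n_gt0 x; have hy := n_gt0 y.
  rewrite -[_^-1 - _^-1](@mulfK _ ((1 + dist x a) * (1 + dist y a))) ?gt_eqF ?mulr_gt0//.
  rewrite ler_pM2r ?invr_gt0 ?mulr_gt0//.
  rewrite mulrBl mulrA mulVf ?gt_eqF// mul1r mulrCA mulVf ?gt_eqF// mulr1.
  have := d_tri y x a; rewrite (d_sym y x); lra.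
- have : 0 < (1 + dist y a)^-1 by rewrite invr_gt0 n_gt0.
  lra.
Qed.

Lemma chain_ge0 u s v : 0 <= chain_len da u s v.
Proof.
elim: s u => [|z s IH] u /=; first exact: da_ge0.
by rewrite addr_ge0 ?da_ge0.
Qed.

Lemma chain_F u s v : Fo u - Fo v <= chain_len da u s v.
Proof.
elim: s u => [|z s IH] u /=; first exact: F_lip.
have := F_lip u z; have := IH z; lra.
Qed.

Lemma chain_cat u s1 v s2 w :
  chain_len da u (s1 ++ v :: s2) w = chain_len da u s1 v + chain_len da v s2 w.
Proof.
elim: s1 u => [|z s IH] u //=.
by rewrite IH addrA.
Qed.

Let SS u v := [set chain_len da u s v | s in [set: seq (option T)]].

Lemma SS_lb u v : has_lbound (SS u v).
Proof. by exists 0 => _ [s _ <-]; exact: chain_ge0. Qed.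

Lemma SS_n0 u v : SS u v !=set0.
Proof. by exists (chain_len da u [::] v); exists [::]. Qed.

Lemma sph_le_chain u s v : sph_dist dist a u v <= chain_len da u s v.
Proof. by apply: (ge_inf (SS_lb u v)); exists s. Qed.

Lemma sph_le_da u v : sph_dist dist a u v <= da u v.
Proof. exact: (sph_le_chain u [::] v). Qed.

Lemma sph_ge0 u v : 0 <= sph_dist dist a u v.
Proof. apply: lb_le_inf; first exact: SS_n0. by move=> _ [s _ <-]; exact: chain_ge0. Qed.

Lemma sph_F u v : Fo u - Fo v <= sph_dist dist a u v.
Proof. apply: lb_le_inf; first exact: SS_n0. by move=> _ [s _ <-]; exact: chain_F. Qed.

Lemma sph_approx u v e : 0 < e -> exists s, chain_len da u s v < sph_dist dist a u v + e.
Proof.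
move=> e0; have [_ [s _ <-] h] := inf_adherent e0 (conj (SS_n0 u v) (SS_lb u v)).
by exists s.
Qed.

Lemma sph_tri u v w : sph_dist dist a u w <= sph_dist dist a u v + sph_dist dist a v w.
Proof.
apply/ler_addgt0Pr => e e0.
have e2 : 0 < e / 2 by rewrite divr_gt0.
have [s1 h1] := sph_approx u v (e/2) e2.
have [s2 h2] := sph_approx v w (e/2) e2.
have := sph_le_chain u (s1 ++ v :: s2) w; rewrite chain_cat.
move: h1 h2; set x := e / 2; have -> : e = x + x by rewrite /x -splitr.
lra.
Qed.


Lemma da_SS x y : da (Some x) (Some y) = dist x y * (Fo (Some x) * Fo (Some y)).
Proof. by rewrite /da /= invfM. Qed.

Lemma Fo_ge0 u : 0 <= Fo u.
Proof. by case: u => [x|] //=; rewrite invr_ge0 ltW// n_gt0. Qed.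

Lemma loc2 m x y : 0 < m -> m <= Fo (Some x) -> m <= Fo (Some y) ->
  m ^+ 2 * dist x y <= da (Some x) (Some y).
Proof.
move=> m0 hx hy; rewrite da_SS; have := d_ge0 x y.
set D := dist x y; set A := Fo (Some x); set B := Fo (Some y) => hD.
have : m * m <= A * B by apply: ler_pM => //; lra.
rewrite expr2 => h; rewrite mulrC; exact: ler_wpM2l.
Qed.

Lemma Fo_pos u : 0 < Fo u -> exists x, u = Some x.
Proof. by case: u => [x|] /=; [exists x|rewrite ltxx]. Qed.

Lemma chain_loc s u v m : 0 < m -> m <= Fo u - chain_len da u s v ->
  exists x y, [/\ u = Some x, v = Some y & m ^+ 2 * dist x y <= chain_len da u s v].
Proof.
move=> m0; elim: s u => [|z s IH] u /=.
- move=> h; have hL := da_ge0 u v; have hF := F_lip u v.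
  have [x ex] : exists x, u = Some x by apply: Fo_pos; lra.
  have [y ey] : exists y, v = Some y by apply: Fo_pos; lra.
  subst u v; exists x, y; split => //; apply: loc2 => //; lra.
- move=> h; have hL := da_ge0 u z; have hF := F_lip u z.
  have hL' := chain_ge0 z s v.
  have [|z' [y [ez ey hzy]]] := IH z; first by lra.
  have [x ex] : exists x, u = Some x by apply: Fo_pos; lra.
  subst u z v; exists x, y; split => //.
  have hxz : m ^+ 2 * dist x z' <= da (Some x) (Some z') by apply: loc2 => //; lra.
  have := d_tri x z' y; have : 0 <= m ^+ 2 by rewrite exprn_ge0// ltW.
  move: hxz hzy; set M := m ^+ 2 => h1 h2 hM ht.
  have := ler_wpM2l hM ht; lra.
Qed.

Lemma chain_F' u s v : Fo v - Fo u <= chain_len da u s v.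
Proof.
elim: s u => [|z s IH] u /=; first by rewrite da_sym; exact: F_lip.
have := F_lip z u; rewrite da_sym; have := IH z; lra.
Qed.

Lemma sph_F' u v : Fo v - Fo u <= sph_dist dist a u v.
Proof. apply: lb_le_inf; first exact: SS_n0. by move=> _ [s _ <-]; exact: chain_F'. Qed.

Lemma Fo_le1 u : Fo u <= 1.
Proof.
case: u => [x|] //=.
by rewrite invr_le1 ?n_gt0 ?unitf_gt0 ?n_gt0// lerDl d_ge0.
Qed.

Lemma sph_SS x y : sph_dist dist a (Some x) (Some y) <= dist x y * (Fo (Some x) * Fo (Some y)).
Proof. rewrite -da_SS; exact: sph_le_da. Qed.

Lemma sph_SS' x y : sph_dist dist a (Some x) (Some y) <= dist x y.
Proof.
apply: (le_trans (sph_SS x y)); rewrite -[leRHS]mulr1; apply: ler_wpM2l; first exact: d_ge0.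
have := Fo_le1 (Some x); have := Fo_le1 (Some y); have := Fo_ge0 (Some x); have := Fo_ge0 (Some y).
set A := Fo _; set B := Fo _ => *; nra.
Qed.

Lemma sph_viainf u y : sph_dist dist a u (Some y) <= Fo u + Fo (Some y).
Proof.
apply: (le_trans (sph_le_chain u [:: None] (Some y))) => /=.
by case: u => [x|]; rewrite /da /= ?add0r.
Qed.

Lemma sph_le1 u v : sph_dist dist a u v <= 1.
Proof. exact: (le_trans (sph_le_da u v) (da_le1 u v)). Qed.

Lemma sph_ball_dopen c r : dopen dist [set y | sph_dist dist a c (Some y) < r].
Proof.
move=> y /= hy; exists (r - sph_dist dist a c (Some y)); first by rewrite subr_gt0.
move=> z; rewrite /mball /= => hz; have := sph_tri c (Some y) (Some z); have := sph_SS' y z; lra.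
Qed.

Lemma small_ball x r v : 0 < r -> r <= Fo (Some x) / 2 ->
  sph_dist dist a (Some x) v < r ->
  exists y, [/\ v = Some y, dist x y < 4 * r * (1 + dist x a) ^+ 2 &
     Fo (Some x) / 2 <= Fo (Some y)].
Proof.
move=> r0 hr hv.
have [s hs] := sph_approx (Some x) v (r - sph_dist dist a (Some x) v) (ltac:(by rewrite subr_gt0)).
have hL : chain_len da (Some x) s v < r by lra.
have hF := chain_F (Some x) s v.
have m0 : 0 < Fo (Some x) / 2 by rewrite divr_gt0// invr_gt0 n_gt0.
have [|x' [y [[<-] ev hd]]] := chain_loc s (Some x) v (Fo (Some x) / 2) m0; first by lra.
subst v; exists y; split => //; last by lra.
have hN := n_gt0 x.
move: hd; rewrite /Fo -/(Fo (Some y)).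
set N := 1 + dist x a => hd.
have hd2 : dist x y = (N^-1 / 2) ^+ 2 * dist x y * (4 * N ^+ 2).
  by field; rewrite gt_eqF.
rewrite hd2 (_ : 4 * r * N ^+ 2 = r * (4 * N ^+ 2)); last by ring.
rewrite ltr_pM2r ?mulr_gt0 ?exprn_gt0//; lra.
Qed.

End sph.



Lemma geo_le {R : realType} (rho : R) : 0 <= rho -> rho < 1 ->
  forall n, \sum_(0 <= k < n) rho ^+ k <= (1 - rho)^-1.
Proof.
move=> r0 r1; have h1 : 0 < 1 - rho by rewrite subr_gt0.
elim=> [|n IH]; first by rewrite big_geq// invr_ge0 ltW.
rewrite big_nat_recl// expr0.
under eq_bigr do rewrite exprS.
rewrite -mulr_sumr.
have := ler_wpM2l r0 IH.
have : (1 - rho)^-1 = 1 + rho * (1 - rho)^-1.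
  by field; rewrite gt_eqF.
set Y := (1 - rho)^-1; set S := \sum_(_ <= _ < _) _; lra.
Qed.

Lemma eseries_bound {R : realType} (g : nat -> R) K : (forall k, 0 <= g k) ->
  (forall n, \sum_(0 <= k < n) g k <= K) ->
  (\sum_(0 <= k <oo) (g k)%:E <= K%:E)%E.
Proof.
move=> g0 hK; apply: lime_le.
  by apply: is_cvg_nneseries => n _ _; rewrite lee_fin.
near=> n; rewrite sumEFin lee_fin; exact: hK.
Unshelve. all: by end_near.
Qed.

Section Ppow.
Context {R : realType} (Q : R) (hQ : 0 < Q).
Definition P (u : R) := u `^ Q.

Lemma P_ge0 u : 0 <= P u. Proof. exact: powR_ge0. Qed.
Lemma P_gt0 u : 0 < u -> 0 < P u. Proof. exact: powR_gt0. Qed.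
Lemma P_M u v : 0 <= u -> 0 <= v -> P (u * v) = P u * P v.
Proof. exact: powRM. Qed.
Lemma P_le u v : 0 <= u -> u <= v -> P u <= P v.
Proof.
move=> u0 uv; apply: (ge0_ler_powR (ltW hQ)) => //; rewrite nnegrE //.
exact: le_trans uv.
Qed.
Lemma P_lt u v : 0 <= u -> u < v -> P u < P v.
Proof.
move=> u0 uv; apply: (gt0_ltr_powR hQ) => //; rewrite nnegrE //.
exact: ltW (le_lt_trans u0 uv).
Qed.
Lemma P1 : P 1 = 1. Proof. by rewrite /P powR1. Qed.
Lemma P_V u : 0 < u -> P (u^-1) = (P u)^-1.
Proof.
move=> u0; have : P u * P u^-1 = 1.
  by rewrite -P_M ?invr_ge0 ?ltW// mulfV ?gt_eqF// P1.
move=> h; apply: (mulfI (x:= P u)); first by rewrite gt_eqF// P_gt0.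
by rewrite h mulfV// gt_eqF// P_gt0.
Qed.
Lemma P_exp2 k : P (2 ^+ k) = P 2 ^+ k.
Proof.
elim: k => [|k IH]; first by rewrite !expr0 P1.
by rewrite !exprS P_M ?exprn_ge0// IH.
Qed.
Lemma w_eq u : 0 <= u -> (u `^ (2 * Q))^-1 = (P u ^+ 2)^-1.
Proof.
move=> u0; congr (_^-1); rewrite mulrC powRrM -/(P u).
by rewrite powR_mulrn// P_ge0.
Qed.
Lemma P2_gt1 : 1 < P 2.
Proof. by rewrite -[X in X < _]P1; apply: P_lt => //; rewrite ltr1n. Qed.
End Ppow.



Section meas.
Context {R : realType} {dsp : measure_display} {T : measurableType dsp}
  (dist : T -> T -> R) (a : T) (mu : {measure set T -> \bar R}) (Q : R).
Hypothesis hm : is_metric dist.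
Hypothesis hopen : forall A, dopen dist A -> measurable A.
Hypothesis hQ : 0 < Q.

Let w y := ((1 + dist y a) `^ (2 * Q))^-1.

Lemma ball_dopen x r : dopen dist (mball dist x r).
Proof.
move=> y; rewrite /mball /= => hy; exists (r - dist x y); first by rewrite subr_gt0.
move=> z; rewrite /mball /= => hz; have := d_tri dist hm x y z; lra.
Qed.

Lemma gt_dopen c : dopen dist [set y | c < 1 + dist y a].
Proof.
move=> y /= hy; exists (1 + dist y a - c); first by rewrite subr_gt0.
move=> z; rewrite /mball /= => hz; have := d_tri dist hm y z a; lra.
Qed.

Lemma lt_dopen c : dopen dist [set y | dist y a < c].
Proof.
move=> y /= hy; exists (c - dist y a); first by rewrite subr_gt0.
move=> z; rewrite /mball /= => hz; have := d_tri dist hm z y a; rewrite (d_sym dist hm z y); lra.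
Qed.

Lemma h_meas : measurable_fun setT (fun y => dist y a).
Proof.
apply: (measurability _ (RGenInftyO.measurableE R)) => //.
move=> _ [_ [x ->] <-]; rewrite setTI; apply: hopen.
rewrite (_ : _ @^-1` _ = [set y | dist y a < x]); first exact: lt_dopen.
by apply/seteqP; split => y /=; rewrite in_itv /=.
Qed.

Lemma w_meas D : measurable_fun D (fun y => (w y)%:E).
Proof.
apply: (measurable_funS (E := setT)) => //.
apply/(measurable_EFinP setT w).
have -> : w = (fun u => u `^ (- (2 * Q))) \o (fun y => 1 + dist y a).
  by apply/funext => y /=; rewrite /w powRN.
apply: measurableT_comp => //; apply: measurable_funD => //; exact: h_meas.
Qed.

Lemma w_ge0 y : 0 <= w y. Proof. by rewrite /w invr_ge0 powR_ge0. Qed.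

Lemma int_lower D B c : measurable D -> measurable B -> B `<=` D -> 0 <= c ->
  (forall y, B y -> c <= w y) ->
  (c%:E * mu B <= \int[mu]_(y in D) (w y)%:E)%E.
Proof.
move=> mD mB BD c0 hc.
apply: (@le_trans _ _ (\int[mu]_(y in B) (w y)%:E)%E); last first.
  apply: ge0_subset_integral => //; first exact: w_meas.
  by move=> y _; rewrite lee_fin w_ge0.
rewrite -(integral_cst mu mB); apply: ge0_le_integral => //;
  try exact: w_meas; try (by move=> y _; rewrite lee_fin ?w_ge0);
  by move=> y /hc; rewrite lee_fin.
Qed.

Lemma int_upper D B c : measurable D -> measurable B -> D `<=` B -> 0 <= c ->
  (forall y, D y -> w y <= c) ->
  (\int[mu]_(y in D) (w y)%:E <= c%:E * mu B)%E.
Proof.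
move=> mD mB DB c0 hc.
apply: (@le_trans _ _ (c%:E * mu D)%E); last first.
  by apply: lee_wpmul2l; [rewrite lee_fin | apply: le_measure => //; rewrite inE].
rewrite -(integral_cst mu mD); apply: ge0_le_integral => //;
  try exact: w_meas; try (by move=> y _; rewrite lee_fin ?w_ge0);
  by move=> y /hc; rewrite lee_fin.
Qed.

Lemma pow2_le m n : (m <= n)%N -> (2 ^+ m : R) <= 2 ^+ n.
Proof. by move=> h; rewrite ler_eXn2l// ltr1n. Qed.

Lemma exists_pow2 (x : R) : exists n, x < 2 ^+ n.
Proof.
exists (Num.trunc x).+1.
apply: (lt_le_trans (truncnS_gt x)).
rewrite -natrX ler_nat; apply: ltnW; exact: ltn_expl.
Qed.

Lemma tail C t : 0 <= C -> 0 < t ->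
  (forall r, 0 < r -> (mu (mball dist a r) <= (C * P Q r)%R%:E)%E) ->
  (\int[mu]_(y in [set y | (t < 1 + dist y a)%R]) (w y)%:E <=
     ((C * P Q 2 / (1 - (P Q 2)^-1)) / P Q t)%R%:E)%E.
Proof.
move=> C0 t0 hC.
pose A := fun k : nat => [set y | t * 2 ^+ k < 1 + dist y a] `\`
                         [set y | t * 2 ^+ k.+1 < 1 + dist y a].
have mA k : measurable (A k) by apply: measurableD; apply: hopen; exact: gt_dopen.
have eqU : [set y | t < 1 + dist y a] = \bigcup_k A k.
  apply/seteqP; split => y /=.
  - move=> hy.
    have exn : exists n, 1 + dist y a <= t * 2 ^+ n.
      have [n hn] := exists_pow2 ((1 + dist y a) / t).
      exists n; rewrite -ler_pdivrMl// mulrC; exact: ltW.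
    case: (ex_minnP exn) => n0 hn0 hmin.
    case: n0 hn0 hmin => [|k] hk hmin.
      by move: hk; rewrite expr0 mulr1 => hk; lra.
    exists k => //; split => /=.
      rewrite ltNge; apply/negP => hk'; have := hmin k hk'; by rewrite ltnn.
    by apply/negP; rewrite -leNgt.
  - move=> [k _ [/= hk _]]; apply: (le_lt_trans _ hk).
    by rewrite ler_pMr//; apply: exprn_ege1; rewrite ler1n.
have tA : trivIset setT A.
  have key i j y : (i < j)%N -> A i y -> A j y -> False.
    move=> ij [_ /= hi] [/= hj _]; move/negP: hi; rewrite -leNgt => hi.
    have : t * 2 ^+ i.+1 <= t * 2 ^+ j by rewrite ler_pM2l// pow2_le.
    lra.
  move=> i j _ _ [y [hi hj]].
  case: (ltngtP i j) => // ij; [exfalso; exact: (key i j y)|exfalso; exact: (key j i y)].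
rewrite eqU ge0_integral_bigcup //; first last.
- by move=> y _; rewrite lee_fin w_ge0.
- exact: w_meas.
have P2g := P2_gt1 Q hQ.
have Ptg : 0 < P Q t by apply: P_gt0.
set rho := (P Q 2)^-1.
have rho0 : 0 <= rho by rewrite invr_ge0; lra.
have rho1 : rho < 1 by rewrite invr_lt1 ?unitf_gt0; lra.
pose g := fun k : nat => C * P Q 2 / P Q t * rho ^+ k.
have g0 k : 0 <= g k.
  rewrite /g; apply: mulr_ge0; last exact: exprn_ge0.
  by apply: mulr_ge0; [apply: mulr_ge0 => //; exact: P_ge0 | rewrite invr_ge0 P_ge0].

apply: (@le_trans _ _ (\sum_(0 <= k <oo) (g k)%:E)%E).
  apply: lee_nneseries => [k _ _|k _].
    by apply: integral_ge0 => y _; rewrite lee_fin w_ge0.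
  have sk0 : 0 < t * 2 ^+ k by rewrite mulr_gt0// exprn_gt0.
  have Psk : 0 < P Q (t * 2 ^+ k) by apply: P_gt0.
  have ck0 : 0 <= (P Q (t * 2 ^+ k) ^+ 2)^-1 by rewrite invr_ge0 exprn_ge0// ltW.
  apply: (@le_trans _ _ (((P Q (t * 2 ^+ k) ^+ 2)^-1)%:E *
                          mu (mball dist a (t * 2 ^+ k.+1)))%E).
    apply: int_upper => //.
    - by apply: hopen; exact: ball_dopen.
    - move=> y [/= h1 h2]; rewrite /mball /= (d_sym dist hm a y).
      by move/negP: h2; rewrite -leNgt => h2; lra.
    - move=> y [/= h1 _]; rewrite /w (w_eq Q) ?addr_ge0 ?(d_ge0 dist hm)//.
      have hy : P Q (t * 2 ^+ k) <= P Q (1 + dist y a).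
        by apply: (P_le Q hQ); [exact: ltW | exact: ltW].
      rewrite lef_pV2 ?posrE ?exprn_gt0//; last by apply: P_gt0; lra.
      by apply: lerXn2r => //; rewrite nnegrE ?P_ge0.
  apply: le_trans; first apply: lee_wpmul2l; first by rewrite lee_fin.
    by apply: hC; rewrite mulr_gt0// exprn_gt0.
  rewrite -EFinM lee_fin le_eqVlt; apply/orP; left; apply/eqP.
  rewrite /g /rho (P_M Q) ?ltW ?exprn_ge0// (P_M Q) ?ltW ?exprn_ge0//.
  rewrite !(P_exp2 Q) (exprS (P Q 2) k) exprVn.
  have h2 : P Q 2 != 0 by rewrite gt_eqF//; lra.
  have ht : P Q t != 0 by rewrite gt_eqF.
  have hk : P Q 2 ^+ k != 0 by rewrite expf_neq0.
  move: h2 ht hk; set X := P Q 2 ^+ k; set Y := P Q 2; set Z := P Q t => h2 ht hk.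
  by field; rewrite hk ht.
apply: eseries_bound => // n.
rewrite /g -mulr_sumr [leRHS]mulrAC.
apply: ler_wpM2l; first by apply: mulr_ge0; [apply: mulr_ge0 => //; exact: P_ge0 | rewrite invr_ge0 P_ge0].
exact: geo_le.
Qed.

End meas.



Lemma inv_le_mul {R : realType} (p q k : R) : 0 < p -> 0 < q -> 0 < k ->
  p^-1 <= k * q^-1 -> q <= k * p.
Proof.
move=> p0 q0 k0 h.
have := ler_wpM2r (ltW (mulr_gt0 p0 q0)) h.
have e1 : p^-1 * (p * q) = q by field; rewrite gt_eqF.
have e2 : k * q^-1 * (p * q) = k * p by field; rewrite gt_eqF.
by rewrite e1 e2.
Qed.

Lemma invC_le {R : realType} (L C' x : R) : 0 < L -> L <= C' -> 0 <= x ->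
  C'^-1 * x <= L^-1 * x.
Proof.
move=> L0 LC x0; apply: ler_wpM2r => //.
by rewrite lef_pV2 ?posrE// (lt_le_trans L0).
Qed.

Definition Kc {R : realType} (Q C : R) :=
  let lam := (2 * C ^+ 2) `^ Q^-1 in
  1 + C * P Q 4 * P Q (3/2) ^+ 2
    + C * P Q 2 / (1 - (P Q 2)^-1) * P Q 3
    + C * P Q 8 * P Q (5/4) ^+ 2
    + C * P Q 2 * P Q (2 * lam + 2) ^+ 2.

Theorem corollary4p4 (R : realType) (Q C : R) (hQ : 0 < Q) :
  exists C' : R,
  forall (dsp : measure_display) (T : measurableType dsp)
    (dist : T -> T -> R) (a : T) (mu : {measure set T -> \bar R}),
    is_metric dist ->
    unbounded dist ->
    (forall A, dopen dist A -> measurable A) ->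
    measure_is_complete mu ->
    (forall x r, 0 < r ->
       (0 < mu (mball dist x r))%E /\ (mu (mball dist x r) < +oo)%E) ->
    ahlfors_regular dist mu Q C ->
    ahlfors_regular (sph_dist dist a)
      (sph_measure dist a mu (2 * Q)) Q C'.
Proof.
exists (Kc Q C) => dsp T dist a mu hm hunb hopen _ _ [hC1 hAR].
have C0 : 0 < C by lra.
have hdiam r : 0 < r -> (r%:E <= 2%:E * mdiam dist)%E.
  move=> r0; have [x [y hxy]] := hunb r.
  apply: (@le_trans _ _ (2%:E * (dist x y)%:E)%E).
    rewrite -EFinM lee_fin; have := d_ge0 dist hm x y; lra.
  apply: lee_wpmul2l => //; apply: ereal_sup_ubound.
  by exists x => //; exists y.
have AU x r : 0 < r -> (mu (mball dist x r) <= (C * P Q r)%:E)%E.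
  by move=> r0; exact: (hAR x r r0 (hdiam r r0)).2.
have AL x r : 0 < r -> ((C^-1 * P Q r)%:E <= mu (mball dist x r))%E.
  by move=> r0; exact: (hAR x r r0 (hdiam r r0)).1.
pose lam := (2 * C ^+ 2) `^ Q^-1.
have Plam : P Q lam = 2 * C ^+ 2.
  rewrite /P /lam -powRrM mulVf ?gt_eqF// powRr1//.
  by rewrite mulr_ge0// exprn_ge0// ltW.
have lam0 : 0 < lam by rewrite /lam powR_gt0// mulr_gt0// exprn_gt0.
have Pg u : 0 < u -> 0 < P Q u by move=> u0; apply: P_gt0.
have P2g := P2_gt1 Q hQ.
have rho1 : 0 < 1 - (P Q 2)^-1 by rewrite subr_gt0 invr_lt1 ?unitf_gt0; lra.
pose K1 := C * P Q 4 * P Q (3/2) ^+ 2.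
pose K2 := C * P Q 2 / (1 - (P Q 2)^-1) * P Q 3.
pose L1 := C * P Q 8 * P Q (5/4) ^+ 2.
pose L2 := C * P Q 2 * P Q (2 * lam + 2) ^+ 2.
have K1g : 0 < K1 by rewrite /K1 !mulr_gt0 ?exprn_gt0 ?Pg.
have K2g : 0 < K2 by rewrite /K2 !mulr_gt0 ?invr_gt0 ?Pg.
have L1g : 0 < L1 by rewrite /L1 !mulr_gt0 ?exprn_gt0 ?Pg.
have L2g : 0 < L2 by rewrite /L2 !mulr_gt0 ?exprn_gt0 ?Pg// addr_gt0// mulr_gt0.
have hKc : Kc Q C = 1 + K1 + K2 + L1 + L2 by [].
split; first by rewrite hKc; lra.
move=> c r r0 hr; rewrite /sph_measure.
set D := [set x | mball (sph_dist dist a) c r (Some x)].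
have mD : measurable D by apply: hopen; exact: (sph_ball_dopen dist a hm c r).
have Pr0 : 0 < P Q r by apply: Pg.
split.
  have r2 : r <= 2.
    have hd1 : (mdiam (sph_dist dist a) <= 1%:E)%E.
      apply: ge_ereal_sup => _ [u _ [v _ <-]]; rewrite lee_fin; exact: sph_le1.
    have := le_trans hr (@lee_wpmul2l _ 2%:E (ltac:(by rewrite lee_fin)) _ _ hd1).
    by rewrite -EFinM lee_fin mulr1.
  suff [L [L0 LK hL]] : exists L, [/\ 0 < L, L <= Kc Q C &
      ((L^-1 * P Q r)%:E <=
        \int[mu]_(x in D) (((1 + dist x a) `^ (2 * Q))^-1)%:E)%E].
    apply: le_trans hL; rewrite lee_fin; apply: invC_le => //; exact: ltW.
  have [[x [ec hsm]]|hc] : (exists x, c = Some x /\ r / 2 <= Fo dist a (Some x)) \/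
      Fo dist a c < r / 2.
    case: c {D mD} => [x|]; last by right => /=; lra.
    by case: (leP (r / 2) (Fo dist a (Some x))) => h; [left; exists x | right].
  - subst c; exists L1; split => //; first by rewrite hKc; lra.
    pose N := 1 + dist x a.
    have N0 : 0 < N by exact: n_gt0.
    have PN0 : 0 < P Q N by apply: Pg.
    move: hsm; rewrite /= -/N => hsm.
    have rN : r * N <= 2.
      have := ler_wpM2r (ltW N0) hsm; rewrite mulVf ?gt_eqF//; lra.
    pose rho := r * N ^+ 2 / 8.
    have rho0 : 0 < rho by rewrite /rho !mulr_gt0// exprn_gt0.
    have rhoN : rho <= N / 4.
      rewrite /rho expr2; have := ler_wpM2r (ltW N0) rN; lra.
    pose B := mball dist x rho.
    have mB : measurable B by apply: hopen; exact: ball_dopen.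
    have hBy y : B y -> 3 / 4 * N <= 1 + dist y a /\ 1 + dist y a <= 5 / 4 * N.
      rewrite /B /mball /= => hy.
      have t1 := d_tri dist hm x y a; have t2 := d_tri dist hm y x a.
      rewrite (d_sym dist hm y x) in t2; rewrite /N; move: rhoN; rewrite /N; lra.
    have sub : B `<=` D.
      move=> y hy; have [hy1 _] := hBy y hy.
      move: hy; rewrite /B /mball /D /= => hy.
      apply: le_lt_trans; first exact: sph_SS.
      rewrite /=; set u := N^-1; set v := (1 + dist y a)^-1.
      have u0 : 0 <= u by rewrite invr_ge0 ltW.
      have Ny0 : 0 < 1 + dist y a by exact: n_gt0.
      have v0 : 0 <= v by rewrite invr_ge0 ltW.
      have vu : v <= 4 / 3 * u.
        rewrite /v /u; rewrite (_ : 4 / 3 * N^-1 = (3 / 4 * N)^-1); last first.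
          by field; rewrite gt_eqF.
        by rewrite lef_pV2 ?posrE// mulr_gt0.
      have d0 := d_ge0 dist hm x y.
      have e1 : dist x y * (u * v) <= dist x y * (u * (4 / 3 * u)).
        by apply: ler_wpM2l => //; apply: ler_wpM2l.
      have e2 : dist x y * (u * u) <= rho * (u * u).
        by apply: ler_wpM2r; [rewrite mulr_ge0 | exact: ltW].
      have e3 : rho * (u * u) = r / 8 by rewrite /rho /u; field; rewrite gt_eqF.
      have e4 : dist x y * (u * (4 / 3 * u)) = 4 / 3 * (dist x y * (u * u)) by ring.
      lra.
    pose c2 := (P Q (5 / 4 * N) ^+ 2)^-1.
    have c20 : 0 <= c2 by rewrite /c2 invr_ge0 exprn_ge0// P_ge0.
    have wb y : B y -> c2 <= ((1 + dist y a) `^ (2 * Q))^-1.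
      move=> hy; have [_ hy2] := hBy y hy.
      have Ny0 : 0 < 1 + dist y a by exact: n_gt0.
      rewrite (w_eq Q); last exact: ltW.
      rewrite /c2 lef_pV2 ?posrE ?exprn_gt0 ?Pg//; last by rewrite mulr_gt0.
      apply: lerXn2r; rewrite ?nnegrE ?P_ge0//.
      by apply: (P_le Q hQ) => //; exact: ltW.
    apply: le_trans; last exact: (int_lower dist a mu Q hm hopen D B c2 mD mB sub c20 wb).
    apply: le_trans; last by apply: lee_wpmul2l; [rewrite lee_fin | apply: AL].
    rewrite -EFinM lee_fin le_eqVlt; apply/orP; left; apply/eqP.
    rewrite /c2 /L1 /rho.
    rewrite (P_M Q (r * N ^+ 2) (8^-1)); [|apply: mulr_ge0; [exact: ltW|exact: exprn_ge0 (ltW N0)]|lra].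
    rewrite (P_M Q r (N ^+ 2)); [|exact: ltW|exact: exprn_ge0 (ltW N0)].
    rewrite (P_M Q (5/4) N); [|lra|exact: ltW].
    rewrite [N ^+ 2]expr2 (P_M Q N N); [|exact: ltW N0|exact: ltW N0].
    rewrite (P_V Q 8); last by lra.
    have h8 : P Q 8 != 0 by rewrite gt_eqF// Pg.
    have h54 : P Q (5/4) != 0 by rewrite gt_eqF// Pg//; lra.
    have hN : P Q N != 0 by rewrite gt_eqF.
    have hC : C != 0 by rewrite gt_eqF.
    move: h8 h54 hN hC; set U := P Q 8; set V := P Q (5/4); set W := P Q N => h8 h54 hN hC.
    by field; rewrite h8 h54 hN hC.
  - exists L2; split => //; first by rewrite hKc; lra.
    pose T0 := 2 / r.
    have T0g : 0 < T0 by rewrite /T0 divr_gt0.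
    have T1 : 1 <= T0 by rewrite /T0 ler_pdivlMr// mul1r.
    pose R1 := 2 * T0.
    have R10 : 0 < R1 by rewrite /R1 mulr_gt0.
    have [z [hz1 hz2]] : exists z, R1 <= dist a z /\ dist a z < lam * R1.
      case: (pselect (exists z, R1 <= dist a z /\ dist a z < lam * R1)) => // hno.
      exfalso.
      have sb : mball dist a (lam * R1) `<=` mball dist a R1.
        move=> y; rewrite /mball /= => hy; rewrite ltNge; apply/negP => hge.
        by apply: hno; exists y.
      have mb1 : measurable (mball dist a R1) by apply: hopen; exact: ball_dopen.
      have mb2 : measurable (mball dist a (lam * R1)) by apply: hopen; exact: ball_dopen.
      have := @le_measure _ _ _ mu (mball dist a (lam * R1)) (mball dist a R1).
      rewrite !inE => /(_ mb2 mb1 sb).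
      move=> hle.
      have := le_trans (le_trans (AL a (lam * R1) (mulr_gt0 lam0 R10)) hle) (AU a R1 R10).
      rewrite lee_fin (P_M Q lam R1); [|exact: ltW|exact: ltW].
      rewrite Plam.
      have PR : 0 < P Q R1 by apply: Pg.
      have -> : C^-1 * (2 * C ^+ 2 * P Q R1) = 2 * (C * P Q R1).
        by field; rewrite gt_eqF.
      have : 0 < C * P Q R1 by rewrite mulr_gt0.
      lra.
    pose B := mball dist z T0.
    have mB : measurable B by apply: hopen; exact: ball_dopen.
    have hBy y : B y -> T0 < 1 + dist y a /\ 1 + dist y a <= (2 * lam + 2) * T0.
      rewrite /B /mball /= => hy.
      have t1 := d_tri dist hm z y a; have t2 := d_tri dist hm y z a.
      rewrite (d_sym dist hm y z) in t2; rewrite (d_sym dist hm a z) in hz1 hz2.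
      move: hz1 hz2; rewrite /R1 => hz1 hz2.
      have : lam * (2 * T0) = 2 * lam * T0 by ring.
      have := d_ge0 dist hm y a.
      have : 0 <= lam * T0 by rewrite mulr_ge0// ltW.
      nra.
    have sub : B `<=` D.
      move=> y hy; have [hy1 _] := hBy y hy.
      rewrite /D /mball /=.
      apply: le_lt_trans; first exact: sph_viainf.
      rewrite /=.
      have Ny0 : 0 < 1 + dist y a by exact: n_gt0.
      have : (1 + dist y a)^-1 < T0^-1 by rewrite ltf_pV2 ?posrE.
      have -> : T0^-1 = r / 2 by rewrite /T0; field; rewrite gt_eqF.
      lra.
    pose c3 := (P Q ((2 * lam + 2) * T0) ^+ 2)^-1.
    have c30 : 0 <= c3 by rewrite /c3 invr_ge0 exprn_ge0// P_ge0.
    have wb y : B y -> c3 <= ((1 + dist y a) `^ (2 * Q))^-1.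
      move=> hy; have [_ hy2] := hBy y hy.
      have Ny0 : 0 < 1 + dist y a by exact: n_gt0.
      rewrite (w_eq Q); last exact: ltW.
      rewrite /c3 lef_pV2 ?posrE ?exprn_gt0 ?Pg//; last by rewrite mulr_gt0// addr_gt0// mulr_gt0.
      apply: lerXn2r; rewrite ?nnegrE ?P_ge0//.
      by apply: (P_le Q hQ) => //; exact: ltW.
    apply: le_trans; last exact: (int_lower dist a mu Q hm hopen D B c3 mD mB sub c30 wb).
    apply: le_trans; last by apply: lee_wpmul2l; [rewrite lee_fin | apply: AL].
    rewrite -EFinM lee_fin le_eqVlt; apply/orP; left; apply/eqP.
    have l0 : 0 < 2 * lam + 2 by rewrite addr_gt0// mulr_gt0.
    rewrite /c3 /L2 (P_M Q (2 * lam + 2) T0); [|exact: ltW|exact: ltW].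
    rewrite /T0 (P_M Q 2 (r^-1)); [|lra|by rewrite invr_ge0 ltW].
    rewrite (P_V Q r) //.
    have h2 : P Q 2 != 0 by rewrite gt_eqF// Pg.
    have hl : P Q (2 * lam + 2) != 0 by rewrite gt_eqF// Pg.
    have hr' : P Q r != 0 by rewrite gt_eqF.
    have hC : C != 0 by rewrite gt_eqF.
    move: h2 hl hr' hC; set U := P Q 2; set V := P Q (2 * lam + 2); set W := P Q r => h2 hl hr' hC.
    by field; rewrite h2 hl hr' hC.
have LARGE : Fo dist a c < 2 * r ->
    (\int[mu]_(x in D) (((1 + dist x a) `^ (2 * Q))^-1)%:E <= (K2 * P Q r)%:E)%E.
  move=> hc.
  have t0 : 0 < (3 * r)^-1 by rewrite invr_gt0 mulr_gt0.
  have sub : D `<=` [set y | (3 * r)^-1 < 1 + dist y a].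
    move=> y /= hy; have := sph_F' dist a hm c (Some y); rewrite /= => hF.
    move: hy; rewrite /D /mball /= => hy.
    have hy' : (1 + dist y a)^-1 < 3 * r by lra.
    by rewrite -ltf_pV2 ?posrE ?invrK//; exact: n_gt0.
  apply: le_trans; first apply: (ge0_subset_integral mu mD _ _ _ sub).
  - by apply: hopen; exact: gt_dopen.
  - exact: w_meas.
  - by move=> y _; rewrite lee_fin invr_ge0 powR_ge0.
  apply: le_trans; first exact: (tail dist a mu Q hm hopen hQ C ((3 * r)^-1) (ltW C0) t0 (AU a)).
  rewrite lee_fin (P_V Q) ?mulr_gt0// invrK (P_M Q 3 r) //; last exact: ltW.
  by rewrite /K2 mulrA.
have [hc|[x [ec hsmall]]] : Fo dist a c < 2 * r \/
    exists x, c = Some x /\ r <= Fo dist a (Some x) / 2.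
  case: c {D mD LARGE} => [x|]; last by left => /=; lra.
  case: (leP r (Fo dist a (Some x) / 2)) => h; [right; by exists x | left; lra].
  apply: le_trans (LARGE hc) _; rewrite lee_fin; apply: ler_wpM2r; [exact: ltW | rewrite hKc; lra].
subst c.
pose N := 1 + dist x a.
have N0 : 0 < N by exact: n_gt0.
have PN0 : 0 < P Q N by apply: Pg.
pose B := mball dist x (4 * r * N ^+ 2).
have mB : measurable B by apply: hopen; exact: ball_dopen.
have sub : D `<=` B.
  move=> y hy.
  by have [y' [[<-] hd _]] := small_ball dist a hm x r (Some y) r0 hsmall hy.
pose c1 := (P Q (2/3 * N) ^+ 2)^-1.
have c10 : 0 <= c1 by rewrite /c1 invr_ge0 exprn_ge0// P_ge0.
have wb y : D y -> ((1 + dist y a) `^ (2 * Q))^-1 <= c1.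
  move=> hy; have hF := sph_F' dist a hm (Some x) (Some y); simpl in hF.
  move: hy; rewrite /D /mball /= => hy.
  move: hsmall; rewrite /= -/N => hsmall.
  have Ny0 : 0 < 1 + dist y a by exact: n_gt0.
  have h1 : (1 + dist y a)^-1 <= 3/2 * N^-1 by lra.
  have h2 := inv_le_mul (1 + dist y a) N (3/2) Ny0 N0 (ltac:(lra)) h1.
  rewrite (w_eq Q); last exact: ltW.
  rewrite /c1 lef_pV2 ?posrE ?exprn_gt0 ?Pg//; last by rewrite mulr_gt0.
  apply: lerXn2r; rewrite ?nnegrE ?P_ge0//.
  apply: (P_le Q hQ); first by rewrite mulr_ge0// ltW.
  lra.
apply: le_trans; first exact: (int_upper dist a mu Q hm hopen D B c1 mD mB sub c10 wb).
apply: le_trans; first by apply: lee_wpmul2l; [rewrite lee_fin | apply: AU; rewrite !mulr_gt0// exprn_gt0].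
rewrite -EFinM lee_fin.
have e32 : P Q (3/2) = (P Q (2/3))^-1.
  by rewrite -(P_V Q) ?divr_gt0//; congr (P Q _); field.
have P23 : 0 < P Q (2/3) by apply: Pg; lra.
have -> : c1 * (C * P Q (4 * r * N ^+ 2)) = K1 * P Q r.
  rewrite /c1 /K1 e32 (P_M Q (2/3) N); [|lra|exact: ltW].
  rewrite (P_M Q (4 * r) (N ^+ 2)); [|apply: mulr_ge0; [lra|exact: ltW]|exact: exprn_ge0 (ltW N0)].
  rewrite (P_M Q 4 r); [|lra|exact: ltW r0].
  rewrite [N ^+ 2]expr2 (P_M Q N N); [|exact: ltW N0|exact: ltW N0].
  have h23 : P Q (2/3) != 0 by rewrite gt_eqF.
  have hN : P Q N != 0 by rewrite gt_eqF.
  move: h23 hN; set U := P Q (2/3); set V := P Q N => h23 hN.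
  by field; rewrite h23 hN.
apply: ler_wpM2r; [exact: ltW | rewrite hKc; lra].
Qed.
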